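(* Let $0<\lambda\le1$ and $f\in\mathcal U(\lambda)$ with $\dfrac{z}{f(z)}=1+\sum_{k=1}^\infty b_kz^k$ in $\mathbb D$. Let $n\ge2$ be an integer and define $f_n$ by $$\frac{z}{f_n(z)}=1+\sum_{k=1}^\infty b_{nk}z^{nk},\qquad z\in\mathbb D.$$ If $z/f_n(z)\ne0$ for all $z\in\mathbb D$, then $f_n\in\mathcal U(\lambda)$.
   Context: $\mathbb D=\{z\in\mathbb C:|z|<1\}$. $\mathcal A$ is the class of functions $f$ analytic in $\mathbb D$ with $f(z)=z+\sum_{k\ge2}a_kz^k$. For $f\in\mathcal A$ with $f(z)\ne0$ for $z\in\mathbb D\setminus\{0\}$, set $U_f(z)=\left(\frac{z}{f(z)}\right)^2f'(z)-1$. For $0<\lambda\le1$, $\mathcal U(\lambda)$ is the class of such $f\in\mathcal A$ with $|U_f(z)|<\lambda$ for all $z\in\mathbb D$. *)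

(* Defs.v *)
From Stdlib Require Import Reals.
From Coquelicot Require Import Coquelicot.
Open Scope R_scope.

Definition inD (z : C) : Prop := Cmod z < 1.

Definition Cderiv (f : C -> C) (z l : C) : Prop :=
  @is_derive C_AbsRing C_NormedModule f z l.

Definition Cseries (a : nat -> C) (l : C) : Prop :=
  @is_series C_AbsRing C_NormedModule a l.

Definition classA (f : C -> C) : Prop :=
  (forall z, inD z -> exists l, Cderiv f z l) /\
  f 0%C = 0%C /\ Cderiv f 0%C 1%C.

(* U_f(z) = (z/f z)^2 f'(z) - 1, with f'(z) = d. *)
Definition Uf (f : C -> C) (z d : C) : C :=
  Cminus (Cmult (Cpow (Cdiv z (f z)) 2) d) 1%C.

(* The class U(lambda).  |U_f(z)| < lambda is required at every z in D\{0};
   at z = 0 the removable singularity gives U_f(0) = f'(0) - 1 = 0 < lambda. *)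
Definition classU (lam : R) (f : C -> C) : Prop :=
  classA f /\
  (forall z, inD z -> z <> 0%C -> f z <> 0%C) /\
  (forall z d, inD z -> z <> 0%C -> Cderiv f z d -> Cmod (Uf f z d) < lam).

(* Main.v *)
Require Import Defs.
From Stdlib Require Import Reals Lra Lia.
From Coquelicot Require Import Coquelicot.
Open Scope R_scope.

Lemma deriv_of_bound (f : C -> C) (x l : C) :
  (forall eps : posreal, exists del : posreal, forall y,
     Cmod (Cminus y x) < del ->
     Cmod (Cminus (Cminus (f y) (f x)) (Cmult (Cminus y x) l)) <= eps * Cmod (Cminus y x)) ->
  Cderiv f x l.
Proof.
  intros H. split.
  - apply is_linear_scal_l.
  - intros x' Hx'. assert (Ex : x = x') by (apply (@is_filter_lim_locally_unique C_AbsRing (AbsRing_NormedModule C_AbsRing)); exact Hx'). subst x'.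
    intros eps. apply (locally_le_locally_norm (V:=AbsRing_NormedModule C_AbsRing)). 
    destruct (H eps) as [del Hd]. exists del. intros y Hy.
    apply Hd. exact Hy.
Qed.

Lemma bound_of_deriv (f : C -> C) (x l : C) :
  Cderiv f x l ->
  (forall eps : posreal, exists del : posreal, forall y,
     Cmod (Cminus y x) < del ->
     Cmod (Cminus (Cminus (f y) (f x)) (Cmult (Cminus y x) l)) <= eps * Cmod (Cminus y x)).
Proof.
  intros [_ H] eps.
  assert (Hl : is_filter_lim (T:=AbsRing_NormedModule C_AbsRing) (locally (T:=AbsRing_UniformSpace C_AbsRing) x) x) by (intros P HP; exact HP).
  specialize (H x Hl eps).
  apply (locally_norm_le_locally (V:=AbsRing_NormedModule C_AbsRing)) in H. destruct H as [del Hd].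
  exists del. intros y Hy. apply Hd. exact Hy.
Qed.

Lemma Cmod_rev (y w : C) : Cmod w - Cmod (Cminus y w) <= Cmod y.
Proof.
  assert (E : w = Cplus y (Copp (Cminus y w))).
  { unfold Cminus. ring. }
  pose proof (Cmod_triangle y (Copp (Cminus y w))) as T.
  rewrite <- E, Cmod_opp in T. lra.
Qed.

Lemma Cderiv_inv (w : C) : w <> 0%C ->
  Cderiv Cinv w (Copp (Cinv (Cmult w w))).
Proof.
  intros Hw. apply deriv_of_bound. intros eps.
  assert (Hm : 0 < Cmod w) by (apply Cmod_gt_0; exact Hw).
  pose proof (cond_pos eps) as Heps.
  assert (Hw3 : 0 < Cmod w * Cmod w * Cmod w) by (repeat apply Rmult_lt_0_compat; lra).
  assert (Hd : 0 < Rmin (Cmod w / 2) (eps * (Cmod w * Cmod w * Cmod w) / 2)).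
  { apply Rmin_glb_lt. lra.
    apply Rmult_lt_0_compat; [|lra]. apply Rmult_lt_0_compat; lra. }
  exists (mkposreal _ Hd). simpl. intros y Hy.
  assert (Hy1 : Cmod (Cminus y w) < Cmod w / 2) by (eapply Rlt_le_trans; [exact Hy|apply Rmin_l]).
  assert (Hy2 : Cmod (Cminus y w) < eps * (Cmod w * Cmod w * Cmod w) / 2) by (eapply Rlt_le_trans; [exact Hy|apply Rmin_r]).
  pose proof (Cmod_rev y w) as Rv.
  assert (Hmy : 0 < Cmod y) by lra.
  assert (Hy0 : y <> 0%C) by (apply Cmod_gt_0; exact Hmy).
  assert (E : Cminus (Cminus (Cinv y) (Cinv w)) (Cmult (Cminus y w) (Copp (Cinv (Cmult w w))))
            = Cmult (Cminus y w) (Cdiv (Cminus y w) (Cmult y (Cmult w w)))).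
  { field. split; auto. }
  rewrite E, Cmod_mult, Cmod_div, !Cmod_mult.
  2: { apply Cmult_neq_0; auto. apply Cmult_neq_0; auto. }
  rewrite (Rmult_comm (Cmod (Cminus y w))). apply Rmult_le_compat_r. apply Cmod_ge_0.
  apply Rle_div_l. apply Rmult_lt_0_compat; nra.
  assert (Cmod w / 2 * (Cmod w * Cmod w) <= Cmod y * (Cmod w * Cmod w)) by (apply Rmult_le_compat_r; nra).
  apply Rmult_le_compat_l with (r := eps) in H; [|lra]. lra.
Qed.
Lemma conv1 f x l : @is_derive C_AbsRing C_NormedModule f x l -> @is_derive C_AbsRing (AbsRing_NormedModule C_AbsRing) f x l.
Proof. intros [_ H]. split. apply is_linear_scal_l. exact H. Qed.
Lemma conv2 f x l : @is_derive C_AbsRing (AbsRing_NormedModule C_AbsRing) f x l -> @is_derive C_AbsRing C_NormedModule f x l.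
Proof. intros [_ H]. split. apply is_linear_scal_l. exact H. Qed.

Lemma Cderiv_mult u v z du dv : Cderiv u z du -> Cderiv v z dv ->
  Cderiv (fun y => Cmult (u y) (v y)) z (Cplus (Cmult du (v z)) (Cmult (u z) dv)).
Proof.
  intros Hu Hv. apply conv2, (@is_derive_mult C_AbsRing u v z du dv (conv1 _ _ _ Hu) (conv1 _ _ _ Hv)).
  intros; apply Cmult_comm.
Qed.

Lemma Cderiv_comp u v z du dv : Cderiv u (v z) du -> Cderiv v z dv ->
  Cderiv (fun y => u (v y)) z (Cmult dv du).
Proof.
  intros Hu Hv. apply (@is_derive_comp C_AbsRing C_NormedModule u v z du dv Hu (conv1 _ _ _ Hv)).
Qed.

Lemma Cderiv_plus u v z du dv : Cderiv u z du -> Cderiv v z dv ->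
  Cderiv (fun y => Cplus (u y) (v y)) z (Cplus du dv).
Proof. intros Hu Hv. apply (@is_derive_plus C_AbsRing C_NormedModule u v z du dv Hu Hv). Qed.

Lemma Cderiv_id z : Cderiv (fun y => y) z 1%C.
Proof. apply conv2, (@is_derive_id C_AbsRing). Qed.

Lemma Cderiv_const (a z : C) : Cderiv (fun _ => a) z 0%C.
Proof. apply (@is_derive_const C_AbsRing C_NormedModule). Qed.

Lemma Cderiv_ext_loc u v z d : (exists r : posreal, forall y, Cmod (Cminus y z) < r -> u y = v y) ->
  Cderiv u z d -> Cderiv v z d.
Proof.
  intros [r Hr] Hu. apply (@is_derive_ext_loc C_AbsRing C_NormedModule u v z d); auto.
  apply (locally_le_locally_norm (V:=AbsRing_NormedModule C_AbsRing)).
  exists r. intros y Hy. apply Hr. exact Hy.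
Qed.

Lemma Cderiv_unique u z d1 d2 : Cderiv u z d1 -> Cderiv u z d2 -> d1 = d2.
Proof.
  intros H1 H2. rewrite <- (is_C_derive_unique u z d1 H1). apply is_C_derive_unique. exact H2.
Qed.

Lemma Cseries_unique a l1 l2 : Cseries a l1 -> Cseries a l2 -> l1 = l2.
Proof.
  intros H1 H2.
  apply (@filterlim_locally_unique nat C_AbsRing C_NormedModule eventually _ (sum_n a)); assumption.
Qed.

Lemma sum_n_zeroC N : @sum_n C_AbelianMonoid (fun _ => RtoC 0) N = RtoC 0.
Proof.
  induction N. rewrite sum_O. reflexivity.
  rewrite sum_Sn, IHN. change (Cplus 0 0 = 0%C). ring.
Qed.

Lemma Cseries_zero : Cseries (fun _ => 0%C) 0%C.
Proof.
  unfold Cseries, is_series.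
  apply (filterlim_ext (fun _ : nat => RtoC 0)).
  intros N. symmetry. apply sum_n_zeroC.
  apply filterlim_const.
Qed.

Lemma Cseries_plus a b la lb : Cseries a la -> Cseries b lb ->
  Cseries (fun k => Cplus (a k) (b k)) (Cplus la lb).
Proof. intros Ha Hb. apply (@is_series_plus C_AbsRing C_NormedModule a b la lb Ha Hb). Qed.

Lemma Cseries_scal c a l : Cseries a l -> Cseries (fun k => Cmult c (a k)) (Cmult c l).
Proof. intros Ha. apply (@is_series_scal C_AbsRing C_NormedModule c a l Ha). Qed.

Lemma Cseries_ext a b l : (forall k, a k = b k) -> Cseries a l -> Cseries b l.
Proof. intros E Ha. apply (@is_series_ext C_AbsRing C_NormedModule a b l E Ha). Qed.

Fixpoint csum (a : nat -> C) (m : nat) : C :=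
  match m with 0 => 0%C | S m => Cplus (csum a m) (a m) end.

Lemma csum_ext a b m : (forall j, (j < m)%nat -> a j = b j) -> csum a m = csum b m.
Proof.
  induction m; intros E; simpl. reflexivity.
  rewrite IHm, E; auto.
Qed.

Lemma csum_plus a b m : csum (fun j => Cplus (a j) (b j)) m = Cplus (csum a m) (csum b m).
Proof. induction m; simpl. ring. rewrite IHm. ring. Qed.

Lemma csum_scal c a m : csum (fun j => Cmult c (a j)) m = Cmult c (csum a m).
Proof. induction m; simpl. ring. rewrite IHm. ring. Qed.

Lemma csum_const c m : csum (fun _ => c) m = Cmult (RtoC (INR m)) c.
Proof.
  induction m; simpl csum. simpl. ring.
  rewrite IHm, S_INR, RtoC_plus. ring.
Qed.

Lemma Cseries_csum (a : nat -> nat -> C) (l : nat -> C) m :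
  (forall j, (j < m)%nat -> Cseries (a j) (l j)) ->
  Cseries (fun k => csum (fun j => a j k) m) (csum l m).
Proof.
  induction m; intros H; simpl.
  - apply Cseries_zero.
  - apply Cseries_plus. apply IHm. intros; apply H; lia. apply H; lia.
Qed.

Lemma Cmod_csum_lt a m lam : (1 <= m)%nat -> (forall j, (j < m)%nat -> Cmod (a j) < lam) ->
  Cmod (csum a m) < INR m * lam.
Proof.
  induction m; intros Hm H. lia.
  destruct m.
  - simpl. replace (Cplus 0 (a 0%nat)) with (a 0%nat) by ring. rewrite Rmult_1_l. apply H; lia.
  - simpl csum. eapply Rle_lt_trans. apply Cmod_triangle.
    rewrite S_INR, Rmult_plus_distr_r, Rmult_1_l.
    apply Rplus_lt_compat. apply IHm. lia. intros; apply H; lia. apply H; lia.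
Qed.

Lemma Cderiv_csum (u : nat -> C -> C) (du : nat -> C) z m :
  (forall j, (j < m)%nat -> Cderiv (u j) z (du j)) ->
  Cderiv (fun y => csum (fun j => u j y) m) z (csum du m).
Proof.
  induction m; intros H; simpl.
  - apply Cderiv_const.
  - apply Cderiv_plus. apply IHm. intros; apply H; lia. apply H; lia.
Qed.

Definition om (n : nat) : C := (cos (2*PI/INR n), sin (2*PI/INR n)).

Lemma om_pow n k : (0 < n)%nat ->
  Cpow (om n) k = (cos (2*PI*INR k/INR n), sin (2*PI*INR k/INR n)).
Proof.
  intros Hn. assert (Hn' : INR n <> 0) by (apply not_0_INR; lia).
  induction k.
  - simpl. replace (2*PI*0/INR n) with 0 by (field; auto).
    rewrite cos_0, sin_0. reflexivity.
  - rewrite Cpow_S, IHk. unfold om, Cmult; cbn [fst snd].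
    replace (2*PI*INR (S k)/INR n) with (2*PI/INR n + 2*PI*INR k/INR n)
      by (rewrite S_INR; field; auto).
    rewrite cos_plus, sin_plus. f_equal; ring.
Qed.

Lemma Cmod_om n : Cmod (om n) = 1.
Proof.
  unfold Cmod, om; simpl.
  pose proof (sin2_cos2 (2*PI/INR n)) as E. unfold Rsqr in E.
  replace (cos (2 * PI / INR n) * (cos (2 * PI / INR n) * 1) +
     sin (2 * PI / INR n) * (sin (2 * PI / INR n) * 1)) with 1 by lra.
  apply sqrt_1.
Qed.

Lemma Cmod_ompow n j : Cmod (Cpow (om n) j) = 1.
Proof. rewrite Cmod_pow, Cmod_om. apply pow1. Qed.

Lemma om_n n : (0 < n)%nat -> Cpow (om n) n = 1%C.
Proof.
  intros Hn. assert (Hn' : INR n <> 0) by (apply not_0_INR; lia).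
  rewrite om_pow by auto.
  replace (2*PI*INR n/INR n) with (2*PI) by (field; auto).
  rewrite cos_2PI, sin_2PI. reflexivity.
Qed.

Lemma om_pow_mod n k : (0 < n)%nat -> Cpow (om n) k = Cpow (om n) (k mod n).
Proof.
  intros Hn. rewrite (Nat.div_mod k n) at 1 by lia.
  rewrite Cpow_add_r, Cpow_mult_r, om_n, Cpow_1_l by auto. ring.
Qed.

Lemma om_pow_ne1 n k : (0 < n)%nat -> (k mod n <> 0)%nat -> Cpow (om n) k <> 1%C.
Proof.
  intros Hn Hk. rewrite om_pow_mod by auto.
  assert (Hr : (k mod n < n)%nat) by (apply Nat.mod_upper_bound; lia).
  set (r := (k mod n)%nat) in *.
  rewrite om_pow by auto.
  assert (H0 : 0 < INR r) by (apply lt_0_INR; lia).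
  assert (H1 : INR r < INR n) by (apply lt_INR; lia).
  assert (Hnp : 0 < INR n) by lra.
  set (t := 2*PI*INR r/INR n).
  assert (Ht0 : 0 < t).
  { unfold t. apply Rdiv_lt_0_compat; [|lra]. pose proof PI_RGT_0. nra. }
  assert (Ht1 : t < 2*PI).
  { unfold t. apply Rlt_div_l; [lra|]. pose proof PI_RGT_0. nra. }
  intros E. injection E as Ec Es.
  destruct (sin_eq_O_2PI_0 t) as [A|[A|A]]; try lra.
  rewrite A, cos_PI in Ec. lra.
Qed.

Lemma geom x m : Cmult (Cminus x 1) (csum (fun j => Cpow x j) m) = Cminus (Cpow x m) 1.
Proof.
  induction m; simpl csum. simpl. ring.
  rewrite Cmult_plus_distr_l, IHm, Cpow_S. ring.
Qed.

Definition rootsum n k := csum (fun j => Cpow (Cpow (om n) k) j) n.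

Lemma rootsum_0 n k : (0 < n)%nat -> (k mod n = 0)%nat -> rootsum n k = RtoC (INR n).
Proof.
  intros Hn Hk. unfold rootsum. rewrite om_pow_mod, Hk by auto. simpl Cpow at 2.
  rewrite (csum_ext _ (fun _ => 1%C)). rewrite csum_const. ring.
  intros j _. apply Cpow_1_l.
Qed.

Lemma rootsum_ne n k : (0 < n)%nat -> (k mod n <> 0)%nat -> rootsum n k = 0%C.
Proof.
  intros Hn Hk. unfold rootsum.
  pose proof (om_pow_ne1 n k Hn Hk) as Hx.
  set (x := Cpow (om n) k) in *.
  assert (Hxn : Cpow x n = 1%C).
  { unfold x. rewrite <- Cpow_mult_r, Nat.mul_comm, Cpow_mult_r, om_n, Cpow_1_l by auto. reflexivity. }
  pose proof (geom x n) as G. rewrite Hxn in G.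
  assert (Hx1 : Cminus x 1 <> 0%C).
  { intros E. apply Hx. replace x with (Cplus (Cminus x 1) 1) by ring. rewrite E. ring. }
  replace (csum (fun j => Cpow x j) n) with
     (Cmult (Cinv (Cminus x 1)) (Cmult (Cminus x 1) (csum (fun j => Cpow x j) n))) by (field; auto).
  rewrite G. ring.
Qed.

Definition amod (n : nat) (c : nat -> C) (k : nat) : C :=
  if Nat.eqb (k mod n) 0 then c k else 0%C.

Lemma amod_step n c m : (0 < n)%nat -> ((S m) mod n <> 0)%nat ->
  @sum_n C_AbelianMonoid (amod n c) (S m) = @sum_n C_AbelianMonoid (amod n c) m.
Proof.
  intros Hn Hm. rewrite sum_Sn. unfold amod at 2.
  destruct (Nat.eqb_spec (S m mod n) 0); [contradiction|].
  change (Cplus (sum_n (amod n c) m) 0 = sum_n (amod n c) m). ring.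
Qed.

Lemma amod_partial n c K p : (0 < n)%nat -> (p < n)%nat ->
  @sum_n C_AbelianMonoid (amod n c) (n*K + p) =
  @sum_n C_AbelianMonoid (fun k => c (n*k)%nat) K.
Proof.
  intros Hn. revert p. induction K; intros p Hp.
  - induction p.
    + rewrite Nat.mul_0_r. simpl. rewrite !sum_O. unfold amod.
      rewrite Nat.Div0.mod_0_l, Nat.mul_0_r. reflexivity.
    + replace (n*0 + S p)%nat with (S (n*0+p)) by lia.
      rewrite amod_step; auto. apply IHp; lia.
      rewrite Nat.mul_0_r. simpl. rewrite Nat.mod_small; lia.
  - induction p.
    + replace (n * S K + 0)%nat with (S (n*K + (n-1))) by lia.
      rewrite !sum_Sn, IHK by lia. f_equal.
      unfold amod. replace (S (n * K + (n - 1))) with (n * S K)%nat by lia.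
      assert (Hm : ((n * S K) mod n = 0)%nat) by (rewrite Nat.mul_comm; apply Nat.Div0.mod_mul).
      rewrite Hm. reflexivity.
    + replace (n * S K + S p)%nat with (S (n * S K + p)) by lia.
      rewrite amod_step; auto. apply IHp; lia.
      replace (S (n * S K + p)) with (S p + S K * n)%nat by lia.
      rewrite Nat.Div0.mod_add, Nat.mod_small; lia.
Qed.

Lemma amod_series n c L : (0 < n)%nat -> Cseries (amod n c) L ->
  Cseries (fun k => c (n*k)%nat) L.
Proof.
  intros Hn H. unfold Cseries, is_series in *.
  apply (filterlim_ext (fun K => sum_n (amod n c) (n*K))).
  - intros K. rewrite <- (Nat.add_0_r (n*K)). apply amod_partial; lia.
  - eapply filterlim_comp; [|exact H].
    apply eventually_subseq. intros k. nia.
Qed.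

Lemma RtoC_neq0 x : x <> 0 -> RtoC x <> 0%C.
Proof. intros H E. apply H. injection E. auto. Qed.

Lemma om_neq0 n j : Cpow (om n) j <> 0%C.
Proof.
  intros E. pose proof (Cmod_ompow n j) as M. rewrite E, Cmod_0 in M. lra.
Qed.

Lemma inD_rot n j (z : C) : inD z -> inD (Cmult (Cpow (om n) j) z).
Proof. unfold inD. rewrite Cmod_mult, Cmod_ompow. lra. Qed.

Lemma rot_neq0 n j (z : C) : z <> 0%C -> Cmult (Cpow (om n) j) z <> 0%C.
Proof. intros Hz. apply Cmult_neq_0. apply om_neq0. exact Hz. Qed.

Definition Hfun (f : C -> C) (n : nat) (z : C) : C :=
  Cmult (Cinv (RtoC (INR n)))
    (csum (fun j => Cdiv (Cmult (Cpow (om n) j) z) (f (Cmult (Cpow (om n) j) z))) n).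

Lemma h_eq (f : C -> C) (b : nat -> C) (n : nat) (h : C -> C) (z : C) :
  (0 < n)%nat ->
  (forall w, inD w -> w <> 0%C ->
     Cseries (fun k => Cmult (b k) (Cpow w k)) (Cdiv w (f w))) ->
  (forall z, inD z ->
     Cseries (fun k => Cmult (b (n * k)%nat) (Cpow z (n * k))) (h z)) ->
  inD z -> z <> 0%C -> h z = Hfun f n z.
Proof.
  intros Hn Hser Hh Hz Hz0.
  assert (Hn' : RtoC (INR n) <> 0%C) by (apply RtoC_neq0, not_0_INR; lia).
  assert (A : Cseries (amod n (fun k => Cmult (b k) (Cpow z k))) (Hfun f n z)).
  { unfold Hfun. apply (Cseries_ext (fun k => Cmult (Cinv (RtoC (INR n)))
        (csum (fun j => Cmult (b k) (Cpow (Cmult (Cpow (om n) j) z) k)) n))).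
    - intros k. rewrite (csum_ext _ (fun j => Cmult (Cmult (b k) (Cpow z k)) (Cpow (Cpow (om n) k) j))).
      + rewrite csum_scal. change (csum (Cpow (Cpow (om n) k)) n) with (rootsum n k). unfold amod.
        destruct (Nat.eqb_spec (k mod n) 0) as [E|E].
        * rewrite rootsum_0 by auto. field. auto.
        * rewrite rootsum_ne by auto. ring.
      + intros j _. rewrite Cpow_mult_l, <- !Cpow_mult_r, (Nat.mul_comm j k). ring.
    - apply Cseries_scal. apply Cseries_csum. intros j _.
      apply Hser. apply inD_rot; auto. apply rot_neq0; auto. }
  apply amod_series in A; auto.
  eapply Cseries_unique. apply Hh; auto. exact A.
Qed.

Lemma h_zero (b : nat -> C) (n : nat) (h : C -> C) :
  (0 < n)%nat -> b 0%nat = 1%C ->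
  (forall z, inD z ->
     Cseries (fun k => Cmult (b (n * k)%nat) (Cpow z (n * k))) (h z)) ->
  h 0%C = 1%C.
Proof.
  intros Hn Hb Hh.
  assert (Hz : inD 0%C) by (unfold inD; rewrite Cmod_0; lra).
  eapply Cseries_unique. apply Hh; auto.
  unfold Cseries, is_series. apply (filterlim_ext (fun _ : nat => RtoC 1)).
  - intros N. symmetry. induction N.
    + rewrite sum_O, Nat.mul_0_r, Hb. simpl. ring.
    + rewrite sum_Sn, IHN. replace (n * S N)%nat with (S (n*N + (n-1))) by lia.
      rewrite Cpow_S. change (Cplus 1 (Cmult (b (S (n * N + (n - 1)))) (Cmult 0 (Cpow 0 (n * N + (n - 1))))) = 1%C).
      ring.
  - apply filterlim_const.
Qed.

Definition dg (f : C -> C) (w : C) : C :=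
  Cminus (Cinv (f w)) (Cmult w (Cmult (C_derive f w) (Cinv (Cmult (f w) (f w))))).

Lemma Cderiv_eq u z d d' : Cderiv u z d -> d = d' -> Cderiv u z d'.
Proof. intros H E; subst; exact H. Qed.

Lemma Cderiv_ext u v z d : (forall y, u y = v y) -> Cderiv u z d -> Cderiv v z d.
Proof. intros E H. apply (@is_derive_ext C_AbsRing C_NormedModule u v z d E H). Qed.

Lemma Cderiv_div u z du : Cderiv u z du -> u z <> 0%C ->
  Cderiv (fun y => Cdiv y (u y)) z
    (Cplus (Cinv (u z)) (Cmult z (Cmult du (Copp (Cinv (Cmult (u z) (u z))))))).
Proof.
  intros Hu Hz.
  pose proof (Cderiv_comp Cinv u z _ du (Cderiv_inv (u z) Hz) Hu) as Hi.
  pose proof (Cderiv_mult (fun y => y) (fun y => Cinv (u y)) z _ _ (Cderiv_id z) Hi) as Hm.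
  eapply Cderiv_eq. exact Hm. cbv beta. ring.
Qed.

Lemma Cderiv_scal_fun (c : C) u z du : Cderiv u z du ->
  Cderiv (fun y => Cmult c (u y)) z (Cmult c du).
Proof.
  intros Hu. eapply Cderiv_eq. apply (Cderiv_mult (fun _ => c) u z 0%C du (Cderiv_const c z) Hu). cbv beta. ring.
Qed.

Lemma Cderiv_rot (c : C) u z du : Cderiv u (Cmult c z) du ->
  Cderiv (fun y => u (Cmult c y)) z (Cmult c du).
Proof.
  intros Hu. apply (Cderiv_comp u (fun y => Cmult c y) z du c Hu).
  eapply Cderiv_eq. apply Cderiv_scal_fun, Cderiv_id. ring.
Qed.

Lemma g_deriv (f : C -> C) w :
  (forall z, inD z -> exists l, Cderiv f z l) -> inD w -> f w <> 0%C ->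
  Cderiv (fun y => Cdiv y (f y)) w (dg f w).
Proof.
  intros HfA Hw Hfw.
  destruct (HfA w Hw) as [l Hl].
  assert (Hd : Cderiv f w (C_derive f w)) by (apply C_derive_correct; [exact w | exists l; exact Hl]).
  eapply Cderiv_eq. apply (Cderiv_div f w _ Hd Hfw). unfold dg. ring.
Qed.

Lemma Uf_g (f : C -> C) w : f w <> 0%C ->
  Uf f w (C_derive f w) =
  Cminus (Cminus (Cdiv w (f w)) (Cmult w (dg f w))) 1%C.
Proof.
  intros H. unfold Uf, dg. simpl Cpow. field. auto.
Qed.

Lemma csum_lin (A B : nat -> C) (z : C) m :
  csum (fun j => Cminus (Cminus (A j) (Cmult z (B j))) 1%C) m =
  Cminus (Cminus (csum A m) (Cmult z (csum B m))) (RtoC (INR m)).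
Proof.
  induction m; simpl csum. simpl. ring.
  rewrite IHm, S_INR, RtoC_plus. ring.
Qed.

Lemma csum_sub1 (A : nat -> C) m :
  csum (fun j => Cminus (A j) 1%C) m = Cminus (csum A m) (RtoC (INR m)).
Proof.
  induction m; simpl csum. simpl. ring.
  rewrite IHm, S_INR, RtoC_plus. ring.
Qed.

Lemma Cmod_csum_le a m e : (forall j, (j < m)%nat -> Cmod (a j) <= e) ->
  Cmod (csum a m) <= INR m * e.
Proof.
  induction m; intros H. simpl. rewrite Cmod_0. lra.
  simpl csum. eapply Rle_trans. apply Cmod_triangle.
  rewrite S_INR, Rmult_plus_distr_r, Rmult_1_l.
  apply Rplus_le_compat. apply IHm. intros; apply H; lia. apply H; lia.
Qed.

Lemma Cmod_INR_inv n : (0 < n)%nat -> Cmod (Cinv (RtoC (INR n))) = / INR n.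
Proof.
  intros Hn. assert (INR n <> 0) by (apply not_0_INR; lia).
  rewrite Cmod_inv by (apply RtoC_neq0; auto). rewrite Cmod_R, Rabs_pos_eq. reflexivity.
  apply pos_INR.
Qed.

Lemma g_lim (f : C -> C) : f 0%C = 0%C -> Cderiv f 0%C 1%C ->
  forall eps : R, 0 < eps -> exists r : R, 0 < r /\ forall w : C, w <> 0%C -> Cmod w < r ->
    f w <> 0%C /\ Cmod (Cminus (Cdiv w (f w)) 1%C) <= eps.
Proof.
  intros Hf0 Hd eps Heps.
  assert (He : 0 < Rmin (1/2) (eps/2)) by (apply Rmin_glb_lt; lra).
  destruct (bound_of_deriv f 0%C 1%C Hd (mkposreal _ He)) as [del Hdel].
  exists del. split. apply cond_pos. intros w Hw0 Hw.
  assert (E1 : Cminus w 0%C = w) by ring.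
  specialize (Hdel w). rewrite E1, Hf0 in Hdel. simpl in Hdel.
  replace (Cminus (Cminus (f w) 0%C) (Cmult w 1%C)) with (Cminus (f w) w) in Hdel by ring.
  specialize (Hdel Hw).
  set (e2 := Rmin (1/2) (eps/2)) in *.
  assert (He1 : e2 <= 1/2) by apply Rmin_l.
  assert (He2 : e2 <= eps/2) by apply Rmin_r.
  assert (Hmw : 0 < Cmod w) by (apply Cmod_gt_0; auto).
  pose proof (Cmod_rev (f w) w) as Rv.
  assert (Hfw : Cmod w / 2 <= Cmod (f w)).
  { assert (e2 * Cmod w <= Cmod w / 2) by nra. lra. }
  assert (Hfw0 : f w <> 0%C) by (apply Cmod_gt_0; lra).
  split; auto.
  replace (Cminus (Cdiv w (f w)) 1%C) with (Cdiv (Copp (Cminus (f w) w)) (f w)) by (field; auto).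
  rewrite Cmod_div, Cmod_opp by auto.
  apply Rle_div_l. lra.
  assert (e2 * Cmod w <= eps * (Cmod w / 2)) by nra.
  assert (eps * (Cmod w/2) <= eps * Cmod (f w)) by (apply Rmult_le_compat_l; lra). lra.
Qed.

Lemma H_lim (f : C -> C) (n : nat) : (0 < n)%nat -> f 0%C = 0%C -> Cderiv f 0%C 1%C ->
  forall eps : R, 0 < eps -> exists r : R, 0 < r /\ forall y : C, y <> 0%C -> Cmod y < r ->
    Cmod (Cminus (Hfun f n y) 1%C) <= eps.
Proof.
  intros Hn Hf0 Hd eps Heps.
  destruct (g_lim f Hf0 Hd eps Heps) as [r [Hr H]].
  exists r. split; auto. intros y Hy0 Hy.
  assert (Hn' : INR n <> 0) by (apply not_0_INR; lia).
  assert (HnC : RtoC (INR n) <> 0%C) by (apply RtoC_neq0; auto).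
  unfold Hfun.
  set (A := fun j => Cdiv (Cmult (Cpow (om n) j) y) (f (Cmult (Cpow (om n) j) y))).
  replace (Cminus (Cmult (Cinv (INR n)) (csum A n)) 1%C)
    with (Cmult (Cinv (INR n)) (csum (fun j => Cminus (A j) 1%C) n)).
  2: { rewrite csum_sub1. field. auto. }
  rewrite Cmod_mult, Cmod_INR_inv by auto.
  assert (Hs : Cmod (csum (fun j => Cminus (A j) 1%C) n) <= INR n * eps).
  { apply Cmod_csum_le. intros j _. unfold A. apply H.
    apply rot_neq0; auto. rewrite Cmod_mult, Cmod_ompow. lra. }
  assert (0 < INR n) by (apply lt_0_INR; lia).
  apply Rmult_le_compat_l with (r := / INR n) in Hs.
  2: { apply Rlt_le, Rinv_0_lt_compat; auto. }
  replace (/ INR n * (INR n * eps)) with eps in Hs by (field; auto). exact Hs.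
Qed.

Lemma fn_deriv0 (f : C -> C) (n : nat) (h : C -> C) :
  (0 < n)%nat -> f 0%C = 0%C -> Cderiv f 0%C 1%C -> h 0%C = 1%C ->
  (forall y, inD y -> y <> 0%C -> h y = Hfun f n y) ->
  Cderiv (fun z => Cdiv z (h z)) 0%C 1%C.
Proof.
  intros Hn Hf0 Hd Hh0 Heq. apply deriv_of_bound. intros eps.
  pose proof (cond_pos eps) as Heps.
  assert (He : 0 < Rmin (1/2) (eps/2)) by (apply Rmin_glb_lt; lra).
  destruct (H_lim f n Hn Hf0 Hd _ He) as [r [Hr H]].
  assert (Hdel : 0 < Rmin r 1) by (apply Rmin_glb_lt; lra).
  exists (mkposreal _ Hdel). simpl. intros y Hy.
  assert (E1 : Cminus y 0%C = y) by ring. rewrite E1 in *.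
  assert (Hy1 : Cmod y < r) by (eapply Rlt_le_trans; [exact Hy|apply Rmin_l]).
  assert (Hy2 : Cmod y < 1) by (eapply Rlt_le_trans; [exact Hy|apply Rmin_r]).
  destruct (Ceq_dec y 0%C) as [Y|Y].
  - subst y. rewrite Hh0.
    replace (Cminus (Cminus (Cdiv 0 1) (Cdiv 0 1)) (Cmult 0 1%C)) with (RtoC 0) by ring.
    rewrite Cmod_0. lra.
  - set (e2 := Rmin (1/2) (eps/2)) in *.
    assert (He1 : e2 <= 1/2) by apply Rmin_l.
    assert (He2 : e2 <= eps/2) by apply Rmin_r.
    assert (Hb : Cmod (Cminus (h y) 1%C) <= e2).
    { rewrite Heq; auto. }
    pose proof (Cmod_rev (h y) 1%C) as Rv. rewrite Cmod_1 in Rv.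
    assert (Hhy : 1/2 <= Cmod (h y)) by lra.
    assert (Hhy0 : h y <> 0%C) by (apply Cmod_gt_0; lra).
    replace (Cminus (Cminus (Cdiv y (h y)) (Cdiv 0 (h 0%C))) (Cmult y 1%C))
      with (Cmult y (Cdiv (Copp (Cminus (h y) 1%C)) (h y))) by (rewrite Hh0; field; auto).
    rewrite Cmod_mult, Cmod_div, Cmod_opp by auto.
    rewrite (Rmult_comm eps). apply Rmult_le_compat_l. apply Cmod_ge_0.
    apply Rle_div_l. lra. nra.
Qed.

Definition dH (f : C -> C) (n : nat) (z : C) : C :=
  Cmult (Cinv (RtoC (INR n))) (csum (fun j => Cmult (Cpow (om n) j) (dg f (Cmult (Cpow (om n) j) z))) n).

Lemma H_deriv (f : C -> C) (n : nat) (z : C) :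
  (forall z, inD z -> exists l, Cderiv f z l) ->
  (forall z, inD z -> z <> 0%C -> f z <> 0%C) ->
  inD z -> z <> 0%C -> Cderiv (Hfun f n) z (dH f n z).
Proof.
  intros HfA Hfnz Hz Hz0. unfold Hfun, dH.
  apply Cderiv_scal_fun.
  apply (Cderiv_csum (fun j y => Cdiv (Cmult (Cpow (om n) j) y) (f (Cmult (Cpow (om n) j) y)))).
  intros j _.
  apply (Cderiv_rot (Cpow (om n) j) (fun w => Cdiv w (f w))).
  apply g_deriv; auto. apply inD_rot; auto. apply Hfnz. apply inD_rot; auto. apply rot_neq0; auto.
Qed.

Theorem theorem5p3 (lam : R) (f : C -> C) (b : nat -> C) (n : nat)
  (h : C -> C) :
  0 < lam -> lam <= 1 ->
  classU lam f ->
  b 0%nat = 1%C ->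
  (forall z, inD z -> z <> 0%C ->
     Cseries (fun k => Cmult (b k) (Cpow z k)) (Cdiv z (f z))) ->
  (2 <= n)%nat ->
  (forall z, inD z ->
     Cseries (fun k => Cmult (b (n * k)%nat) (Cpow z (n * k))) (h z)) ->
  (forall z, inD z -> h z <> 0%C) ->
  classU lam (fun z => Cdiv z (h z)).
Proof.
  intros Hlam _ HU Hb Hser Hn2 Hh Hhnz.
  destruct HU as [[HfA [Hf0 Hf'0]] [Hfnz Hbd]].
  assert (Hn : (0 < n)%nat) by lia.
  assert (Hn' : INR n <> 0) by (apply not_0_INR; lia).
  assert (HnC : RtoC (INR n) <> 0%C) by (apply RtoC_neq0; auto).
  assert (Hh0 : h 0%C = 1%C) by (eapply h_zero; eauto).
  assert (Heq : forall y, inD y -> y <> 0%C -> h y = Hfun f n y)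
    by (intros; eapply h_eq; eauto).
  assert (D0 : Cderiv (fun z => Cdiv z (h z)) 0%C 1%C) by (eapply fn_deriv0; eauto).
  set (DFN := fun z => Cplus (Cinv (Hfun f n z))
      (Cmult z (Cmult (dH f n z) (Copp (Cinv (Cmult (Hfun f n z) (Hfun f n z))))))).
  assert (DZ : forall z, inD z -> z <> 0%C -> Cderiv (fun z => Cdiv z (h z)) z (DFN z)).
  { intros z Hz Hz0.
    assert (HH : Hfun f n z <> 0%C) by (rewrite <- Heq; auto).
    apply (Cderiv_ext_loc (fun y => Cdiv y (Hfun f n y))).
    - assert (Hmz : 0 < Cmod z) by (apply Cmod_gt_0; auto).
      unfold inD in Hz.
      assert (Hr : 0 < Rmin (Cmod z) (1 - Cmod z)) by (apply Rmin_glb_lt; lra).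
      exists (mkposreal _ Hr). simpl. intros y Hy.
      assert (Hy1 : Cmod (Cminus y z) < Cmod z) by (eapply Rlt_le_trans; [exact Hy|apply Rmin_l]).
      assert (Hy2 : Cmod (Cminus y z) < 1 - Cmod z) by (eapply Rlt_le_trans; [exact Hy|apply Rmin_r]).
      pose proof (Cmod_rev y z) as Rv.
      assert (Hyz : Cmod y <= Cmod z + Cmod (Cminus y z)).
      { replace y with (Cplus z (Cminus y z)) at 1 by ring. apply Cmod_triangle. }
      rewrite Heq; auto. unfold inD; lra. apply Cmod_gt_0; lra.
    - apply Cderiv_div; auto. apply H_deriv; auto. }
  split; [split; [|split]|split].
  - intros z Hz. destruct (Ceq_dec z 0%C) as [Z|Z].
    + subst z. exists 1%C. exact D0.
    + exists (DFN z). apply DZ; auto.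
  - cbv beta. unfold Cdiv. ring.
  - exact D0.
  - intros z Hz Hz0. cbv beta. unfold Cdiv. apply Cmult_neq_0; auto.
    intros E. pose proof (Cinv_l (h z) (Hhnz z Hz)) as I. rewrite E in I.
    assert (C0 : RtoC 0 = RtoC 1) by (rewrite <- I; ring). injection C0. lra.
  - intros z d Hz Hz0 Hd.
    assert (Ed : d = DFN z) by (eapply Cderiv_unique; [exact Hd | apply DZ; auto]).
    subst d.
    assert (HH : Hfun f n z <> 0%C) by (rewrite <- Heq; auto).
    set (w := fun j => Cmult (Cpow (om n) j) z).
    assert (Hw : forall j, inD (w j)) by (intros; apply inD_rot; auto).
    assert (Hw0 : forall j, w j <> 0%C) by (intros; apply rot_neq0; auto).
    assert (Hfw : forall j, f (w j) <> 0%C) by (intros; apply Hfnz; auto).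
    assert (Key : Uf (fun z => Cdiv z (h z)) z (DFN z) =
      Cmult (Cinv (RtoC (INR n))) (csum (fun j => Uf f (w j) (C_derive f (w j))) n)).
    { rewrite (csum_ext _ (fun j => Cminus (Cminus (Cdiv (w j) (f (w j)))
          (Cmult z (Cmult (Cpow (om n) j) (dg f (w j))))) 1%C)).
      2: { intros j _. rewrite Uf_g by auto. unfold w. ring. }
      rewrite csum_lin.
      unfold Uf, DFN. rewrite (Heq z Hz Hz0).
      unfold dH, Hfun in *. unfold w.
      set (S := csum (fun j => Cdiv (Cmult (Cpow (om n) j) z) (f (Cmult (Cpow (om n) j) z))) n) in *.
      set (T := csum (fun j => Cmult (Cpow (om n) j) (dg f (Cmult (Cpow (om n) j) z))) n) in *.
      assert (S0 : S <> 0%C) by (intros E; apply HH; rewrite E; ring).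
      simpl Cpow. field. auto. }
    rewrite Key, Cmod_mult, Cmod_INR_inv by auto.
    assert (Hs : Cmod (csum (fun j => Uf f (w j) (C_derive f (w j))) n) < INR n * lam).
    { apply Cmod_csum_lt. lia. intros j _. apply Hbd; auto.
      destruct (HfA (w j) (Hw j)) as [l Hl].
      apply (C_derive_correct f (w j) (w j)). exists l. exact Hl. }
    assert (0 < INR n) by (apply lt_0_INR; lia).
    apply Rmult_lt_compat_l with (r := / INR n) in Hs.
    2: { apply Rinv_0_lt_compat; auto. }
    replace (/ INR n * (INR n * lam)) with lam in Hs by (field; auto). exact Hs.
Qed.
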